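(* Let $n\ge1$ and $K=\ker(f_{\Delta_n}\circ f_{\Delta_n^*}^* )=\ker(f_{\Delta_n^*}\circ f_{\Delta_n}^* )\cong(\mathbb{Z}/(n+1))^n\subset\mathbb{T}^n$. Then the inclusion $f_{\Delta_n^*}^*(\mathbb{T}^n)\hookrightarrow\mathbb{T}^{n+1}$ induces a group isomorphism $f_{\Delta_n^*}^*(\mathbb{T}^n)/D_{\Delta_n}\cong \mathbb{T}^{n+1}/N_{\Delta_n}$, and $f_{\Delta_n^*}^*$ induces a group isomorphism $\mathbb{T}^n/K\cong f_{\Delta_n^*}^*(\mathbb{T}^n)/D_{\Delta_n}$. Symmetrically, the inclusion induces $f_{\Delta_n}^*(\mathbb{T}^n)/D_{\Delta_n^*}\cong\mathbb{T}^{n+1}/N_{\Delta_n^*}$ and $f_{\Delta_n}^*$ induces $\mathbb{T}^n/K\cong f_{\Delta_n}^*(\mathbb{T}^n)/D_{\Delta_n^*}$. In particular $D_{\Delta_n}$ and $D_{\Delta_n^*}$ are finite.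
   Context: Let $e_1,\dots,e_n$ be the standard basis of $\mathbb{R}^n$ and $\mathbf{1}=(1,\dots,1)\in\mathbb{R}^n$. Put $u_i=e_i$ for $1\le i\le n$, $u_{n+1}=-\mathbf{1}$, and $v_i=(n+1)e_i-\mathbf{1}$ for $1\le i\le n$, $v_{n+1}=-\mathbf{1}$. Define linear maps $F_{\Delta_n},F_{\Delta_n^*}:\mathbb{R}^{n+1}\to\mathbb{R}^n$ by $F_{\Delta_n}(x)=\sum_{i=1}^{n+1}x_iu_i$ and $F_{\Delta_n^*}(x)=\sum_{i=1}^{n+1}x_iv_i$, and their transposes $F_{\Delta_n}^*(y)=(u_1\cdot y,\dots,u_{n+1}\cdot y)$, $F_{\Delta_n^*}^*(y)=(v_1\cdot y,\dots,v_{n+1}\cdot y)$. Write $\mathbb{T}^k=\mathbb{R}^k/\mathbb{Z}^k$. These integer matrices induce group homomorphisms $f_{\Delta_n},f_{\Delta_n^*}:\mathbb{T}^{n+1}\to\mathbb{T}^n$ and $f_{\Delta_n}^*,f_{\Delta_n^*}^*:\mathbb{T}^n\to\mathbb{T}^{n+1}$. Let $N_{\Delta_n}=\ker f_{\Delta_n}$, $N_{\Delta_n^*}=\ker f_{\Delta_n^*}$, $D_{\Delta_n}=N_{\Delta_n}\cap f_{\Delta_n^*}^*(\mathbb{T}^n)$ and $D_{\Delta_n^*}=N_{\Delta_n^*}\cap f_{\Delta_n}^*(\mathbb{T}^n)$. *)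

(* Defs.v *)
From HB Require Import structures.
From mathcomp Require Import all_boot all_order all_algebra.
From mathcomp Require Import reals.
Set Implicit Arguments. Unset Strict Implicit. Unset Printing Implicit Defensive.
Import Order.TTheory GRing.Theory Num.Theory.
Local Open Scope ring_scope.

(* Points of T^k = R^k/Z^k are represented by real vectors x : 'I_k -> R;
   two representatives give the same point of T^k iff their difference is
   in Z^k (relation [teq]).  Subsets of T^k are predicates on representatives
   that are invariant under [teq]. *)

(* integer coefficient matrices: c i j = j-th coordinate of u_i (resp. v_i) *)
Definition uD (n : nat) (i : 'I_n.+1) (j : 'I_n) : int :=
  if (val i < n)%N then ((val i == val j) : nat)%:Z else -1.
Definition vD (n : nat) (i : 'I_n.+1) (j : 'I_n) : int :=
  if (val i < n)%N then (n.+1)%:Z * ((val i == val j) : nat)%:Z - 1 else -1.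

Arguments uD : clear implicits.
Arguments vD : clear implicits.

Section Torus.
Variable R : realType.

Definition vadd k (x y : 'I_k -> R) : 'I_k -> R := fun i => x i + y i.
Definition vsub k (x y : 'I_k -> R) : 'I_k -> R := fun i => x i - y i.

Definition isint_vec k (x : 'I_k -> R) : Prop := forall i, x i \is a Num.int.
Definition teq k (x y : 'I_k -> R) : Prop := isint_vec (vsub x y).

Definition Fmap n (c : 'I_n.+1 -> 'I_n -> int) (x : 'I_n.+1 -> R) : 'I_n -> R :=
  fun j => \sum_(i < n.+1) (c i j)%:~R * x i.
Definition Ftr n (c : 'I_n.+1 -> 'I_n -> int) (y : 'I_n -> R) : 'I_n.+1 -> R :=
  fun i => \sum_(j < n) (c i j)%:~R * y j.

Definition Nker n (c : 'I_n.+1 -> 'I_n -> int) (x : 'I_n.+1 -> R) : Prop :=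
  isint_vec (Fmap c x).
Definition Img n (c : 'I_n.+1 -> 'I_n -> int) (x : 'I_n.+1 -> R) : Prop :=
  exists y : 'I_n -> R, teq x (Ftr c y).
Definition Dset n (cN cI : 'I_n.+1 -> 'I_n -> int) (x : 'I_n.+1 -> R) : Prop :=
  Nker cN x /\ Img cI x.
Definition Kset n (c1 c2 : 'I_n.+1 -> 'I_n -> int) (y : 'I_n -> R) : Prop :=
  isint_vec (Fmap c1 (Ftr c2 y)).

(* The map phi : R^k -> R^l (a homomorphism of tori, i.e. compatible with
   Z^k/Z^l) induces a group isomorphism A/H ≅ B/M, where H <= A are subgroups
   of T^k and M <= B subgroups of T^l: phi is well defined on tori, additive
   on tori, maps A into B, the induced map A -> B/M is surjective and its
   kernel is exactly H. *)
Definition induced_iso k l (A H : ('I_k -> R) -> Prop) (B M : ('I_l -> R) -> Prop)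
    (phi : ('I_k -> R) -> ('I_l -> R)) : Prop :=
  [/\ forall x y, teq x y -> teq (phi x) (phi y),
      forall x y, teq (phi (vadd x y)) (vadd (phi x) (phi y)),
      forall x, A x -> B (phi x),
      forall z, B z -> exists2 x, A x & M (vsub z (phi x))
    & forall x, A x -> (M (phi x) <-> H x)].

Definition iso_onto n m (psi : ('I_n -> 'Z_m) -> ('I_n -> R))
    (K : ('I_n -> R) -> Prop) : Prop :=
  [/\ forall a b, teq (psi (fun i => a i + b i)) (vadd (psi a) (psi b)),
      forall a, K (psi a),
      forall a b, teq (psi a) (psi b) -> forall i, a i = b i
    & forall y, K y -> exists a, teq y (psi a)].

Definition torus_finite k (S : ('I_k -> R) -> Prop) : Prop :=
  exists m (z : 'I_m -> ('I_k -> R)), forall x, S x -> exists j, teq x (z j).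

End Torus.

(* Main.v *)
Require Import Defs.
From HB Require Import structures.
From mathcomp Require Import all_boot all_order all_algebra.
From mathcomp Require Import reals.
From mathcomp Require Import zify ring.
Set Implicit Arguments. Unset Strict Implicit. Unset Printing Implicit Defensive.
Import Order.TTheory GRing.Theory Num.Theory.
Local Open Scope ring_scope.

Lemma sum_delta (R : realType) n (F : 'I_n -> R) (j : 'I_n) :
  \sum_(i < n) (((val i == val j) : nat)%:Z)%:~R * F i = F j.
Proof.
rewrite (bigD1 j) //= eqxx mul1r big1 ?addr0 // => i /negbTE.
by rewrite -val_eqE => ->; rewrite mul0r.
Qed.

Lemma sum_delta' (R : realType) n (F : 'I_n -> R) (j : 'I_n) :
  \sum_(i < n) (((val j == val i) : nat)%:Z)%:~R * F i = F j.
Proof. by rewrite -(sum_delta F j); apply: eq_bigr => i _; rewrite eq_sym. Qed.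

Definition wd n (j : 'I_n) : 'I_n.+1 := widen_ord (leqnSn n) j.

Lemma Fmap_u (R : realType) n (x : 'I_n.+1 -> R) j :
  Fmap (uD n) x j = x (wd j) - x ord_max.
Proof.
rewrite /Fmap big_ord_recr /= /uD /= ltnn.
rewrite (eq_bigr (fun i : 'I_n => (((val i == val j) : nat)%:Z)%:~R * x (wd i))).
  by rewrite sum_delta mulN1r.
by move=> i _ /=; rewrite ltn_ord.
Qed.

Lemma Fmap_v (R : realType) n (x : 'I_n.+1 -> R) j :
  Fmap (vD n) x j = (n.+1)%:R * x (wd j) - \sum_i x i.
Proof.
rewrite /Fmap big_ord_recr /= /vD /= ltnn.
rewrite (eq_bigr (fun i : 'I_n => (n.+1)%:R * ((((val i == val j) : nat)%:Z)%:~R * x (wd i)) - x (wd i))).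
  rewrite sumrB -mulr_sumr sum_delta mulN1r -addrA -opprD.
  by rewrite [in RHS]big_ord_recr.
move=> i _ /=; rewrite ltn_ord rmorphB /= rmorphM /= mulrBl mul1r mulrA.
by rewrite -[(n.+1)%:Z%:~R]/((n.+1)%:R : R).
Qed.

Lemma Ftr_u_w (R : realType) n (y : 'I_n -> R) i :
  Ftr (uD n) y (wd i) = y i.
Proof.
rewrite /Ftr /uD /= ltn_ord; exact: sum_delta'.
Qed.

Lemma Ftr_u_m (R : realType) n (y : 'I_n -> R) :
  Ftr (uD n) y ord_max = - \sum_j y j.
Proof.
rewrite /Ftr /uD /= ltnn -sumrN; apply: eq_bigr => j _; by rewrite mulN1r.
Qed.

Lemma Ftr_v_w (R : realType) n (y : 'I_n -> R) i :
  Ftr (vD n) y (wd i) = (n.+1)%:R * y i - \sum_j y j.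
Proof.
rewrite /Ftr /vD /= ltn_ord.
rewrite (eq_bigr (fun j : 'I_n => (n.+1)%:R * ((((val i == val j) : nat)%:Z)%:~R * y j) - y j)).
  by rewrite sumrB -mulr_sumr sum_delta'.
move=> j _ /=; rewrite rmorphB /= rmorphM /= mulrBl mul1r mulrA.
by rewrite -[(n.+1)%:Z%:~R]/((n.+1)%:R : R).
Qed.

Lemma Ftr_v_m (R : realType) n (y : 'I_n -> R) :
  Ftr (vD n) y ord_max = - \sum_j y j.
Proof.
rewrite /Ftr /vD /= ltnn -sumrN; apply: eq_bigr => j _; by rewrite mulN1r.
Qed.

Lemma ord_cases n (i : 'I_n.+1) : i = ord_max \/ exists j : 'I_n, i = wd j.
Proof.
case: (unliftP ord_max i) => [j ->|->]; last by left.
right; exists j; apply: val_inj => /=; by rewrite /bump leqNgt ltn_ord.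
Qed.

Lemma scal1 (R : realType) (N : nat) (r : R) : (0 < N)%N ->
  (N%:R * r \is a Num.int) -> exists a : 'I_N, r - (val a)%:R / N%:R \is a Num.int.
Proof.
move=> N0 /intrP [k hk].
have hN : (N%:R : R) != 0 by rewrite pnatr_eq0 -lt0n.
have r_eq : r = k%:~R / N%:R by rewrite -hk mulrC mulKf.
have rm0 : (0 <= (k %% N)%Z) by apply: modz_ge0; rewrite eqz_nat -lt0n.
have rmlt : ((k %% N)%Z < N%:Z) by apply: ltz_pmod; rewrite ltz_nat.
have hm : (absz (k %% N)%Z)%:Z = (k %% N)%Z by rewrite gez0_abs.
have hmN : (absz (k %% N)%Z < N)%N by rewrite -ltz_nat hm.
exists (Ordinal hmN) => /=; rewrite r_eq; apply/intrP; exists (k %/ N)%Z.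
rewrite {1}(divz_eq k N) rmorphD rmorphM /= -hm.
rewrite -[((absz _)%:Z)%:~R]/((absz (k %% N)%Z)%:R : R).
rewrite -[(N%:Z)%:~R]/(N%:R : R).
by field.
Qed.

Lemma scal2 (R : realType) (N : nat) (a b : 'I_N) :
  (val a)%:R / N%:R - (val b)%:R / N%:R \is a @Num.int R -> a = b.
Proof.
move=> /intrP [z hz].
have N0 : (0 < N)%N by case: N a {b hz} => [[]|].
have hN : (N%:R : R) != 0 by rewrite pnatr_eq0 -lt0n.
have : ((val a)%:Z - (val b)%:Z = z * N%:Z)%R.
  apply: (@intr_inj R); rewrite rmorphB rmorphM /=.
  rewrite -[((val a)%:Z)%:~R]/((val a)%:R : R) -[((val b)%:Z)%:~R]/((val b)%:R : R).
  rewrite -[(N%:Z)%:~R]/(N%:R : R) -hz; by field.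
move=> e; apply: val_inj => /=; clear hz.
case: a b e => [x hx] [y hy] /= e.
case: z e => [[|k]|k] e.
- by move: e; rewrite mul0r => /eqP; rewrite subr_eq0 => /eqP [].
- have : ((k.+1 * N)%N <= x)%N by rewrite -lez_nat PoszM -e; lia.
  nia.
- have : ((k.+1 * N)%N <= y)%N.
    rewrite -lez_nat PoszM; move: e; rewrite NegzE mulNr => e; lia.
  nia.
Qed.

Lemma Fmap_sub (R : realType) n c (x y : 'I_n.+1 -> R) j :
  Fmap c (vsub x y) j = Fmap c x j - Fmap c y j.
Proof. rewrite /Fmap /vsub -sumrB; apply: eq_bigr => i _; by rewrite mulrBr. Qed.

Lemma Ftr_sub (R : realType) n c (x y : 'I_n -> R) j :
  Ftr c (vsub x y) j = Ftr c x j - Ftr c y j.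
Proof. rewrite /Ftr /vsub -sumrB; apply: eq_bigr => i _; by rewrite mulrBr. Qed.

Lemma Ftr_add (R : realType) n c (x y : 'I_n -> R) j :
  Ftr c (vadd x y) j = Ftr c x j + Ftr c y j.
Proof. rewrite /Ftr /vadd -big_split; apply: eq_bigr => i _; by rewrite mulrDr. Qed.

Lemma Ftr0 (R : realType) n c j : Ftr c (fun _ : 'I_n => (0 : R)) j = 0.
Proof. rewrite /Ftr big1 // => i _; by rewrite mulr0. Qed.

Lemma Fmap_int (R : realType) n c (x : 'I_n.+1 -> R) :
  isint_vec x -> isint_vec (Fmap c x).
Proof. move=> hx j; apply: rpred_sum => i _; apply: rpredM => //; exact: intr_int. Qed.

Lemma Ftr_int (R : realType) n c (x : 'I_n -> R) :
  isint_vec x -> isint_vec (Ftr c x).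
Proof. move=> hx j; apply: rpred_sum => i _; apply: rpredM => //; exact: intr_int. Qed.

Lemma teq_refl (R : realType) k (x : 'I_k -> R) : teq x x.
Proof. by move=> i; rewrite /vsub subrr. Qed.

Lemma teq_Ftr (R : realType) n c (x y : 'I_n -> R) :
  teq x y -> teq (Ftr c x) (Ftr c y).
Proof. move=> h i; rewrite /vsub -Ftr_sub; exact: Ftr_int. Qed.

Lemma Kuv (R : realType) n (y : 'I_n -> R) j :
  Fmap (uD n) (Ftr (vD n) y) j = (n.+1)%:R * y j.
Proof. by rewrite Fmap_u Ftr_v_w Ftr_v_m opprK subrK. Qed.

Lemma sumFtr_u (R : realType) n (y : 'I_n -> R) : \sum_i Ftr (uD n) y i = 0.
Proof.
rewrite big_ord_recr /= Ftr_u_m.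
rewrite (eq_bigr (fun i => y i)) ?subrr // => i _; exact: Ftr_u_w.
Qed.

Lemma Kvu (R : realType) n (y : 'I_n -> R) j :
  Fmap (vD n) (Ftr (uD n) y) j = (n.+1)%:R * y j.
Proof. by rewrite Fmap_v sumFtr_u subr0 Ftr_u_w. Qed.

Lemma iso_gen (R : realType) n (cN c : 'I_n.+1 -> 'I_n -> int)
  (H : ('I_n -> R) -> Prop) :
  (forall x, H x <-> Kset cN c x) ->
  induced_iso (fun _ => True) H (Img c) (Dset cN c) (Ftr (R:=R) c).
Proof.
move=> hH; split.
- move=> x y; exact: teq_Ftr.
- by move=> x y i; rewrite /vsub Ftr_add /vadd subrr.
- move=> x _; exists x; exact: teq_refl.
- move=> z [y hy]; exists y => //; split; first exact: Fmap_int.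
  exists (fun _ => 0) => i; rewrite /vsub Ftr0 subr0; exact: (hy i).
- move=> x _; rewrite hH; split; first by case.
  move=> h; split => //; exists x; exact: teq_refl.
Qed.

Lemma Nint_Ftr (R : realType) n c (y : 'I_n -> R) :
  (forall j, (n.+1)%:R * y j \is a Num.int) ->
  forall i, (n.+1)%:R * Ftr c y i \is a Num.int.
Proof.
move=> h i; rewrite /Ftr mulr_sumr; apply: rpred_sum => j _.
rewrite mulrCA; apply: rpredM => //; exact: intr_int.
Qed.

Lemma Dset_fin (R : realType) n (cN c : 'I_n.+1 -> 'I_n -> int) :
  (forall y : 'I_n -> R, Kset cN c y -> forall j, (n.+1)%:R * y j \is a Num.int) ->
  torus_finite (Dset (R:=R) cN c).
Proof.
move=> hK.
pose z := fun j : 'I_#|{ffun 'I_n.+1 -> 'I_n.+1}| =>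
   (fun i => (val (enum_val j i))%:R / (n.+1)%:R : R).
exists #|{ffun 'I_n.+1 -> 'I_n.+1}|, z => x [hN [y hy]].
have hy' : Kset cN c y.
  move=> j; have := hN j; rewrite -[Fmap cN x j](subrK (Fmap cN (Ftr c y) j)).
  rewrite -Fmap_sub => h; rewrite -(rpredDl _ (Fmap_int cN hy j)); exact: h.
have hx : forall i, (n.+1)%:R * x i \is a Num.int.
  move=> i; rewrite -[x i](subrK (Ftr c y i)) mulrDr; apply: rpredD.
    apply: rpredM; [exact: natr_int | exact: (hy i)].
  exact: (@Nint_Ftr R n c y (hK _ hy') i).
pose P i := fun a : 'I_n.+1 => x i - (val a)%:R / (n.+1)%:R \is a Num.int.
have ex i : exists a, P i a by exact: scal1.
pose f := [ffun i => xchoose (ex i)].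
exists (enum_rank f) => i; rewrite /vsub /z enum_rankK ffunE.
exact: (xchooseP (ex i)).
Qed.

Lemma scal3 (R : realType) (N x y : nat) : (0 < N)%N ->
  ((x + y) %% N)%N%:R / N%:R - (x%:R / N%:R + y%:R / N%:R) \is a @Num.int R.
Proof.
move=> N0; have hN : (N%:R : R) != 0 by rewrite pnatr_eq0 -lt0n.
have e : (x%:R + y%:R : R) = ((x + y) %/ N)%N%:R * N%:R + ((x + y) %% N)%N%:R.
  by rewrite -natrD {1}(divn_eq (x + y) N) natrD natrM.
apply/intrP; exists (- (((x + y) %/ N)%N)%:Z).
rewrite -mulrDl e rmorphN /=.
rewrite -[((((x + y) %/ N)%N)%:Z)%:~R]/((((x + y) %/ N)%N)%:R : R).
by field.
Qed.

Lemma valZp m (a b : 'Z_(m.+2)) : val (a + b) = ((val a + val b) %% m.+2)%N.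
Proof. by []. Qed.

Unset Implicit Arguments.
Theorem mainTheorem3 (R : realType) (n : nat) (hn : (1 <= n)%N) :
  (forall y : 'I_n -> R, Kset (uD n) (vD n) y <-> Kset (vD n) (uD n) y) /\
  (exists psi : ('I_n -> 'Z_(n.+1)) -> ('I_n -> R),
      iso_onto psi (Kset (uD n) (vD n))) /\
  induced_iso (Img (R:=R) (vD n)) (Dset (uD n) (vD n))
              (fun _ => True) (Nker (uD n)) id /\
  induced_iso (fun _ => True) (Kset (uD n) (vD n))
              (Img (vD n)) (Dset (uD n) (vD n)) (Ftr (R:=R) (vD n)) /\
  induced_iso (Img (R:=R) (uD n)) (Dset (vD n) (uD n))
              (fun _ => True) (Nker (vD n)) id /\
  induced_iso (fun _ => True) (Kset (uD n) (vD n))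
              (Img (uD n)) (Dset (vD n) (uD n)) (Ftr (R:=R) (uD n)) /\
  torus_finite (Dset (R:=R) (uD n) (vD n)) /\
  torus_finite (Dset (R:=R) (vD n) (uD n)).
Proof.
have hN : ((n.+1)%:R : R) != 0 by rewrite pnatr_eq0.
have K1 : forall y : 'I_n -> R, Kset (uD n) (vD n) y <-> Kset (vD n) (uD n) y.
  move=> y; rewrite /Kset /isint_vec.
  by split => h j; move: (h j); rewrite Kuv Kvu.
have KN : forall y : 'I_n -> R, Kset (uD n) (vD n) y ->
    forall j, (n.+1)%:R * y j \is a Num.int.
  by move=> y h j; move: (h j); rewrite Kuv.
split; first exact: K1.
split.
  case: n hn hN K1 KN => [//|m] _ hN K1 KN.
  exists (fun a i => (val (a i))%:R / (m.+2)%:R); split.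
  - move=> a b i; rewrite /vsub /vadd valZp; exact: scal3.
  - move=> a j; rewrite /Kset Kuv mulrC divfK //; exact: natr_int.
  - move=> a b h i; exact: (@scal2 R (m.+2) (a i) (b i) (h i)).
  - move=> y hy.
    pose P i := fun a : 'I_m.+2 => y i - (val a)%:R / (m.+2)%:R \is a Num.int.
    have ex i : exists a, P i a by apply: scal1 => //; exact: KN.
    exists (fun i => xchoose (ex i)) => i; exact: (xchooseP (ex i)).
split.
  split.
  - by move=> x y h.
  - move=> x y; exact: teq_refl.
  - by move=> x hx.
  - move=> z _.
    exists (Ftr (vD n) (fun j => (z (wd j) - z ord_max) / (n.+1)%:R)).
      by exists (fun j => (z (wd j) - z ord_max) / (n.+1)%:R); exact: teq_refl.
    move=> j; rewrite Fmap_sub Fmap_u Kuv mulrC divfK // subrr; exact: rpred0.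
  - by move=> x hx; split; [move=> h; split | case].
split; first by apply: iso_gen.
split.
  split.
  - by move=> x y h.
  - move=> x y; exact: teq_refl.
  - by move=> x hx.
  - move=> z _.
    exists (Ftr (uD n) (fun j => z (wd j) - (\sum_i z i) / (n.+1)%:R)).
      by exists (fun j => z (wd j) - (\sum_i z i) / (n.+1)%:R); exact: teq_refl.
    move=> j; rewrite Fmap_sub Fmap_v Kvu mulrBr (mulrC _ (_ / _)) divfK // subrr; exact: rpred0.
  - by move=> x hx; split; [move=> h; split | case].
split; first by apply: iso_gen => x; rewrite K1.
split; first exact: Dset_fin.
apply: Dset_fin => y h; apply: KN; exact/K1.
Qed.
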